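(* Fix $x\in\mathbf{X}$ and let $(k_0,j_0)$ be the unique pair with $x\in\mathbf{X}_{k_0,j_0}$. Suppose OOD detectors satisfy $H_{OOD,k}(x)\le\delta_k$ for $k=1,\dots,T$ and the within-task prediction satisfies $H_{WP}(x)\le\epsilon$. Let the task-id prediction be $\mathbf{P}(x\in\mathbf{X}_k\mid D)=\frac{\mathbf{P}'_k(x\in\mathbf{X}_k\mid D)}{\sum_{k'}\mathbf{P}'_{k'}(x\in\mathbf{X}_{k'}\mid D)}$ and the class-incremental prediction be $\mathbf{P}(x\in\mathbf{X}_{k,j}\mid D)=\mathbf{P}(x\in\mathbf{X}_{k,j}\mid x\in\mathbf{X}_k,D)\,\mathbf{P}(x\in\mathbf{X}_k\mid D)$. Then $$H_{CIL}(x)\le\epsilon+\Big(\sum_k\mathbf{1}_{x\in\mathbf{X}_k}e^{\delta_k}\Big)\Big(\sum_k(1-e^{-\delta_k})\Big),$$ where $\mathbf{1}_{x\in\mathbf{X}_k}$ is the indicator of $x\in\mathbf{X}_k$.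
   Context: $\mathbf{X}$ is an input domain which is the disjoint union of task domains $\mathbf{X}_1,\dots,\mathbf{X}_T$, and each $\mathbf{X}_k$ is the disjoint union of class domains $\mathbf{X}_{k,j}$. $D$ is a fixed conditioning event. A within-task prediction (WP) gives, for each task $k$, a probability distribution $\{\mathbf{P}(x\in\mathbf{X}_{k,j}\mid x\in\mathbf{X}_k,D)\}_j$ over the classes of task $k$; $H_{WP}(x)=-\log\mathbf{P}(x\in\mathbf{X}_{k_0,j_0}\mid x\in\mathbf{X}_{k_0},D)$. $H_{CIL}(x)=-\log\mathbf{P}(x\in\mathbf{X}_{k_0,j_0}\mid D)$. An OOD detector for task $k$ is a value $\mathbf{P}'_k(x\in\mathbf{X}_k\mid D)\in[0,1]$ with $\mathbf{P}'_k(x\in\mathbf{X}\setminus\mathbf{X}_k\mid D)=1-\mathbf{P}'_k(x\in\mathbf{X}_k\mid D)$, and $H_{OOD,k}(x)=-\log\mathbf{P}'_k(x\in\mathbf{X}_k\mid D)$ if $x\in\mathbf{X}_k$, $H_{OOD,k}(x)=-\log\mathbf{P}'_k(x\in\mathbf{X}\setminus\mathbf{X}_k\mid D)$ otherwise. *)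

(* Defs.v *)
From mathcomp Require Import all_boot all_order all_algebra.
From mathcomp Require Import all_classical all_reals all_analysis.
Set Implicit Arguments.
Unset Strict Implicit.
Unset Printing Implicit Defensive.
Import Order.TTheory GRing.Theory Num.Theory.
Local Open Scope ring_scope.

Section Defs.
Variable R : realType.

Definition neglog (p : R) : \bar R :=
  if 0 < p then (- ln p)%:E else +oo%E.

Variables (X : Type) (T : nat) (n : 'I_T -> nat).
(* tsk x = the unique task k with x in X_k; cls x = the unique class j with x in X_{k,j} *)
Variable tsk : X -> 'I_T.
Variable cls : forall x : X, 'I_(n (tsk x)).

(* Pood k x = P'_k(x in X_k | D) *)
Definition H_OOD (Pood : 'I_T -> X -> R) (k : 'I_T) (x : X) : \bar R :=
  if tsk x == k then neglog (Pood k x) else neglog (1 - Pood k x).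

(* WP k x j = P(x in X_{k,j} | x in X_k, D) *)
Definition H_WP (WP : forall k : 'I_T, X -> 'I_(n k) -> R) (x : X) : \bar R :=
  neglog (WP (tsk x) x (cls x)).

Definition task_pred (Pood : 'I_T -> X -> R) (k : 'I_T) (x : X) : R :=
  Pood k x / \sum_(k' < T) Pood k' x.

Definition cil_pred (WP : forall k : 'I_T, X -> 'I_(n k) -> R)
  (Pood : 'I_T -> X -> R) (k : 'I_T) (x : X) (j : 'I_(n k)) : R :=
  WP k x j * task_pred Pood k x.

Definition H_CIL (WP : forall k : 'I_T, X -> 'I_(n k) -> R)
  (Pood : 'I_T -> X -> R) (x : X) : \bar R :=
  neglog (cil_pred WP Pood x (cls x)).

End Defs.

(* Main.v *)
Require Import Defs.
From mathcomp Require Import all_boot all_order all_algebra.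
From mathcomp Require Import all_classical all_reals all_analysis.
Import Order.TTheory GRing.Theory Num.Theory.
Local Open Scope ring_scope.

Lemma neglog_bound (R : realType) (p d : R) : p <= 1 ->
  (neglog p <= d%:E)%E -> [/\ 0 < p, expR (- d) <= p & 0 <= d].
Proof.
move=> p1; rewrite /neglog; case: ifP => // p0; rewrite lee_fin => h.
split => //.
- by rewrite -(lnK p0) ler_expR lerNl.
- by apply: le_trans h; rewrite oppr_ge0 ln_le0.
Qed.

Theorem theorem3 (R : realType) (X : Type) (T : nat) (n : 'I_T -> nat)
  (tsk : X -> 'I_T) (cls : forall x : X, 'I_(n (tsk x)))
  (Pood : 'I_T -> X -> R) (WP : forall k : 'I_T, X -> 'I_(n k) -> R)
  (hPood : forall k x, 0 <= Pood k x <= 1)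
  (hWP0 : forall k x j, 0 <= WP k x j)
  (hWP1 : forall k x, \sum_(j < n k) WP k x j = 1)
  (x : X) (delta : 'I_T -> R) (eps : R)
  (hOOD : forall k : 'I_T, (H_OOD tsk Pood k x <= (delta k)%:E)%E)
  (hWPx : (H_WP cls WP x <= eps%:E)%E) :
  (H_CIL cls WP Pood x <=
     (eps + (\sum_(k < T) (tsk x == k)%:R * expR (delta k))
            * (\sum_(k < T) (1 - expR (- delta k))))%:E)%E.
Proof.
set k0 := tsk x.
have hsum1 : \sum_(k < T) (k0 == k)%:R * expR (delta k) = expR (delta k0).
  rewrite (bigD1 k0) //= eqxx mul1r big1 ?addr0 // => k /negbTE.
  by rewrite eq_sym => ->; rewrite mul0r.
rewrite hsum1.
have hk k : k != k0 -> [/\ 0 < 1 - Pood k x, expR (- delta k) <= 1 - Pood k x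
                         & 0 <= delta k].
  move=> kk0; apply: neglog_bound.
    by rewrite lerBlDr lerDl; case/andP: (hPood k x).
  by have := hOOD k; rewrite /H_OOD eq_sym (negbTE kk0).
have [p0 ep0 d0] : [/\ 0 < Pood k0 x, expR (- delta k0) <= Pood k0 x
                         & 0 <= delta k0].
  apply: neglog_bound; first by case/andP: (hPood k0 x).
  by have := hOOD k0; rewrite /H_OOD eqxx.
set w := WP k0 x (cls x).
have [w0 _ _] : [/\ 0 < w, expR (- eps) <= w & 0 <= eps].
  apply: neglog_bound => //.
  by rewrite /w -(hWP1 k0 x) (bigD1 (cls x)) //= lerDl sumr_ge0.
move: hWPx; rewrite /H_WP -/k0 -/w /neglog w0 lee_fin => hw.
set S := \sum_(k < T) Pood k x.
set B := \sum_(k < T | k != k0) (1 - expR (- delta k)).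
have hS : S = Pood k0 x + \sum_(k < T | k != k0) Pood k x.
  by rewrite /S (bigD1 k0).
have hSB : S - Pood k0 x <= B.
  rewrite hS addrAC subrr add0r /B; apply: ler_sum => k kk0.
  by case: (hk k kk0) => _ h _; rewrite lerBrDr addrC -lerBrDr.
have B0 : 0 <= B.
  by apply: sumr_ge0 => k kk0; case: (hk k kk0) => _ _ h;
    rewrite subr_ge0 expR_le1 oppr_le0.
have hBall : B <= \sum_(k < T) (1 - expR (- delta k)).
  rewrite [X in _ <= X](bigD1 k0) //= -/B lerDr subr_ge0 expR_le1 oppr_le0 //.
have Sp : 0 <= S - Pood k0 x.
  by rewrite hS addrAC subrr add0r sumr_ge0 // => k _; case/andP: (hPood k x).
have S0 : 0 < S by apply: (lt_le_trans p0); rewrite -subr_ge0.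
rewrite /H_CIL /cil_pred /task_pred -/k0 -/w -/S /neglog.
have pos : 0 < w * (Pood k0 x / S) by rewrite mulr_gt0 // divr_gt0.
rewrite pos lee_fin.
have e1 : Pood k0 x * expR (delta k0) >= 1.
  by rewrite -(expRxMexpNx_1 (delta k0)) [X in _ <= X]mulrC ler_wpM2l ?expR_ge0.

have hA : (S - Pood k0 x) / Pood k0 x <= expR (delta k0) * B.
  rewrite ler_pdivrMr // (le_trans hSB) // mulrAC ler_peMl //.
  by rewrite mulrC.
rewrite lnM ?posrE ?divr_gt0 // opprD lerD //.
have -> : Pood k0 x / S = (1 + (S - Pood k0 x) / Pood k0 x)^-1.
  by rewrite mulrBl divff ?gt_eqF // addrC subrK invf_div.
rewrite lnV ?posrE; last by apply: (lt_le_trans ltr01); rewrite lerDl divr_ge0 // ltW.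
rewrite opprK (le_trans (le_ln1Dx _)) //.
  by apply: (lt_le_trans (_ : -1 < 0)) => //; rewrite divr_ge0 // ltW.
by rewrite (le_trans hA) // ler_wpM2l ?expR_ge0.
Qed.
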